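(* Let $\mathcal{L}=(n,\mathcal{M},\mathcal{C})$ be a linearization and let $\mathcal{T}\subseteq\mathcal{P}$ be a subset of the proper monomials. A binary vector $y\in\{0,1\}^{\mathcal{S}\cup\mathcal{T}}$ can be extended to a vector $y'\in P(\mathcal{L})\cap\mathbb{Z}^{\mathcal{M}}$ if and only if $y_m=\prod_{i\in m}y_{\{i\}}$ holds for each $m\in\mathcal{T}$.
   Context: $[n]=\{1,\dots,n\}$; a monomial is a nonempty subset of $[n]$; $\mathcal{S}=\{\{i\}:i\in[n]\}$. A linearization is a triple $\mathcal{L}=(n,\mathcal{M},\mathcal{C})$, where $\mathcal{M}$ is a set of monomials with $\mathcal{S}\subseteq\mathcal{M}$ and $\mathcal{C}$ is a set of AND-constraints; each AND-constraint is a set $c\subseteq\mathcal{M}$ whose union $\bigcup c$ lies in $\mathcal{M}$. $\mathcal{P}=\mathcal{M}\setminus\mathcal{S}$. Linearizations are assumed consistent: for each $m\in\mathcal{P}$ there is $c\in\mathcal{C}$ with $\bigcup c=m$ and $|m'|<|m|$ for all $m'\in c$. $P(\mathcal{L})\subseteq\mathbb{R}^{\mathcal{M}}$ is the set of $y$ with $0\le y_m\le1$ for all $m\in\mathcal{M}$, $y_{\bigcup c}\le y_m$ for all $c\in\mathcal{C}$, $m\in c$, and $\sum_{m\in c}y_m\le y_{\bigcup c}+|c|-1$ for all $c\in\mathcal{C}$. *)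

(* Defs.v *)
From mathcomp Require Import all_boot all_order all_algebra.
Set Implicit Arguments. Unset Strict Implicit. Unset Printing Implicit Defensive.
Import Order.TTheory GRing.Theory Num.Theory.
Local Open Scope ring_scope.

(* Variables are indexed by 'I_n (i.e. [n] = {1..n} shifted to {0..n-1}).
   A monomial is a nonempty subset of 'I_n. *)

Definition singletons (n : nat) : {set {set 'I_n}} := [set [set i] | i : 'I_n].

Definition cunion (n : nat) (c : {set {set 'I_n}}) : {set 'I_n} :=
  \bigcup_(m in c) m.

Definition is_linearization (n : nat) (M : {set {set 'I_n}})
    (C : {set {set {set 'I_n}}}) : Prop :=
  [/\ (forall m, m \in M -> m != set0),
      singletons n \subset M,
      (forall c, c \in C -> c \subset M /\ cunion c \in M) &
      (forall m, m \in M :\: singletons n ->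
         exists2 c, c \in C &
           cunion c = m /\ (forall m', m' \in c -> #|m'| < #|m|)%N)].

Definition proper_monomials (n : nat) (M : {set {set 'I_n}}) :=
  M :\: singletons n.

Definition in_PL (R : realFieldType) (n : nat) (M : {set {set 'I_n}})
    (C : {set {set {set 'I_n}}}) (y : {set 'I_n} -> R) : Prop :=
  [/\ (forall m, m \in M -> 0 <= y m <= 1),
      (forall c m, c \in C -> m \in c -> y (cunion c) <= y m) &
      (forall c, c \in C ->
         \sum_(m in c) y m <= y (cunion c) + (#|c|%:R - 1))].

(* Main.v *)
Require Import Defs.
From mathcomp Require Import all_boot all_order all_algebra.
From mathcomp Require Import zify lra.
Import Order.TTheory GRing.Theory Num.Theory.
Local Open Scope ring_scope.

Lemma prodb (R : realFieldType) n (f : 'I_n -> R) (A : {set 'I_n}) :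
  (forall i, f i = 0 \/ f i = 1) ->
  \prod_(i in A) f i = if [forall i in A, f i == 1] then 1 else 0.
Proof.
move=> fb; case: ifP => [/forallP H | /negbT].
  by apply: big1 => i iA; move: (H i); rewrite iA /= => /eqP.
rewrite negb_forall => /existsP [i]; rewrite negb_imply => /andP [iA fi].
rewrite (bigD1 i) //=; case: (fb i) => [->|E]; first by rewrite mul0r.
by rewrite E eqxx in fi.
Qed.

Lemma prodb01 (R : realFieldType) n (f : 'I_n -> R) (A : {set 'I_n}) :
  (forall i, f i = 0 \/ f i = 1) ->
  \prod_(i in A) f i = 0 \/ \prod_(i in A) f i = 1.
Proof. by move=> fb; rewrite prodb //; case: ifP; auto. Qed.

Lemma prodb_mono (R : realFieldType) n (f : 'I_n -> R) (A B : {set 'I_n}) :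
  (forall i, f i = 0 \/ f i = 1) -> A \subset B ->
  \prod_(i in B) f i <= \prod_(i in A) f i.
Proof.
move=> fb AB; rewrite !prodb //.
case: ifP => [/forallP H|_]; last by case: ifP.
have -> : [forall i in A, f i == 1]; last by [].
apply/forallP => i; apply/implyP => iA.
by move: (H i); rewrite (subsetP AB i iA).
Qed.

Lemma int01 (R : realFieldType) (z : int) :
  0 <= z%:~R :> R -> z%:~R <= 1 :> R -> z%:~R = 0 :> R \/ z%:~R = 1 :> R.
Proof.
rewrite ler0z lerz1 => H1 H2.
have : z = 0 \/ z = 1 by lia.
by case=> ->; [left|right].
Qed.

Theorem proposition2p1 (R : realFieldType) (n : nat)
    (M : {set {set 'I_n}}) (C : {set {set {set 'I_n}}})
    (T : {set {set 'I_n}}) (y : {set 'I_n} -> R) :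
  is_linearization M C ->
  T \subset proper_monomials M ->
  (forall m, m \in singletons n :|: T -> y m = 0 \/ y m = 1) ->
  ((exists y' : {set 'I_n} -> R,
      [/\ in_PL M C y',
          (forall m, m \in M -> exists z : int, y' m = z%:~R) &
          (forall m, m \in singletons n :|: T -> y' m = y m)])
   <->
   (forall m, m \in T -> y m = \prod_(i in m) y [set i])).
Proof.
move=> [Mne SM CM cons] TP yb.
have sing : forall i : 'I_n, [set i] \in singletons n :|: T.
  by move=> i; rewrite in_setU; apply/orP; left; apply/imsetP; exists i.
have fb : forall i : 'I_n, y [set i] = 0 \/ y [set i] = 1 by move=> i; exact: yb.
split.
- move=> [y' [[Hb Hle Hsum] Hint Hagr]].
  have b' : forall m, m \in M -> y' m = 0 \/ y' m = 1.
    move=> m mM; have [z Hz] := Hint m mM; have /andP [h1 h2] := Hb m mM.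
    by rewrite Hz; apply: int01; rewrite -Hz.
  have fb' : forall i : 'I_n, y' [set i] = 0 \/ y' [set i] = 1.
    by move=> i; rewrite Hagr //.
  have key : forall k (m : {set 'I_n}), (#|m| <= k)%N -> m \in M ->
      y' m = \prod_(i in m) y' [set i].
    elim=> [|k IH] m.
      by rewrite leqn0 cards_eq0 => /eqP -> /Mne; rewrite eqxx.
    move=> hk mM.
    case: (boolP (m \in singletons n)) => [/imsetP [i _ ->]|ns].
      by rewrite big_set1.
    have mP : m \in M :\: singletons n by rewrite in_setD ns mM.
    have [c cC [cu hc]] := cons m mP.
    have [cM _] := CM c cC.
    have IHc : forall m', m' \in c -> y' m' = \prod_(i in m') y' [set i].
      move=> m' m'c; apply: IH; last exact: (subsetP cM).
      by have := hc m' m'c; lia.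
    rewrite prodb //; case: ifP => [/forallP H | /negbT Hn].
      have all1 : forall m', m' \in c -> y' m' = 1.
        move=> m' m'c; rewrite IHc // prodb //.
        suff -> : [forall i in m', y' [set i] == 1] by [].
        apply/forallP => i; apply/implyP => im'.
        move: (H i); rewrite -cu; have -> : i \in cunion c.
          by apply/bigcupP; exists m'.
        by [].
      have := Hsum c cC; rewrite cu.
      rewrite (eq_bigr (fun _ => 1)) // sumr_const.
      case: (b' m mM) => -> //; rewrite -[1 *+ #|c|]/(#|c|%:R); lra.
    case: (b' m mM) => // E.
    move: Hn; rewrite negb_forall => /existsP [i]; rewrite negb_imply.
    move=> /andP [im fi]; move: im; rewrite -cu => /bigcupP [m' m'c im'].
    have := Hle c m' cC m'c; rewrite cu E IHc // prodb //.
    case: ifP => [/forallP H | _].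
      by move: (H i); rewrite im' /= (negbTE fi).
    by rewrite ler10.
  move=> m mT; rewrite -Hagr; last by rewrite in_setU mT orbT.
  have mM : m \in M by move: (subsetP TP m mT); rewrite in_setD => /andP [].
  rewrite (key _ m (leqnn _) mM); apply: eq_bigr => i _; exact: Hagr.
- move=> HT; exists (fun m : {set 'I_n} => \prod_(i in m) y [set i]); split.
  + split.
    * by move=> m _; case: (@prodb01 _ _ _ m fb) => ->; rewrite ?ler01 ?lexx.
    * move=> c m cC mc; apply: prodb_mono => //.
      by apply: (bigcup_sup m).
    * move=> c cC.
      case: (boolP [forall i in cunion c, y [set i] == 1]) => [H|Hn].
        rewrite [X in _ <= X + _]prodb // H.
        have : \sum_(m in c) \prod_(i in m) y [set i] <= \sum_(m in c) (1 : R).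
          by apply: ler_sum => m _; case: (@prodb01 _ _ _ m fb) => ->; rewrite ?ler01.
        rewrite sumr_const -[1 *+ #|c|]/(#|c|%:R); lra.
      rewrite [X in _ <= X + _]prodb // (negbTE Hn) add0r.
      move: Hn; rewrite negb_forall => /existsP [i]; rewrite negb_imply.
      move=> /andP [/bigcupP [m0 m0c im0] fi].
      have P0 : \prod_(i in m0) y [set i] = 0.
        rewrite prodb //; case: ifP => // /forallP H; move: (H i).
        by rewrite im0 /= (negbTE fi).
      have : 1 <= \sum_(m in c) (1 - \prod_(i in m) y [set i]).
        rewrite (bigD1 m0) //= P0 subr0 lerDl; apply: sumr_ge0 => m _.
        by case: (@prodb01 _ _ _ m fb) => ->; rewrite ?subr0 ?subrr ?ler01.
      rewrite sumrB sumr_const -[1 *+ #|c|]/(#|c|%:R); lra.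
  + move=> m _; case: (@prodb01 _ _ _ m fb) => ->; [by exists 0 | by exists 1].
  + move=> m; rewrite in_setU => /orP [/imsetP [i _ ->]|mT].
      by rewrite big_set1.
    by rewrite HT.
Qed.
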